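(* Fix $l,r>0$, $0<\alpha<\beta<1$ and diffusion constants $D_1\neq D_2$, and let $\delta=\frac{D_2-D_1}{D_2+D_1}$. For every $Q_0\in\mathbb{R}$ there is a unique $A(Q_0)\in(0,A_M)$ with $G_2(Q_0,A(Q_0),\delta)=0$. Furthermore $\lim_{Q_0\to\pm\infty}A(Q_0)=l$. Let $Q_0^*=Q_0^-$ if $\delta>0$ and $Q_0^*=Q_0^+$ if $\delta<0$, where $Q_0^-<0$ (for $\delta>0$) is the number such that $\partial_{Q_0}A$ has the same sign as $l-r$ for $Q_0>Q_0^-$ and the opposite sign for $Q_0<Q_0^-$, and $Q_0^+>0$ (for $\delta<0$) is the number such that $\partial_{Q_0}A$ has the sign opposite to $l-r$ for $Q_0<Q_0^+$ and the same sign for $Q_0>Q_0^+$. Then for all $Q_0\in\mathbb{R}$: (a) if $l<r$ then $l\le A(Q_0)\le A(Q_0^* )$; (b) if $l>r$ then $A(Q_0^* )\le A(Q_0)\le l$; (c) if $l=r$ then $A(Q_0)=l=r=A(Q_0^* )$.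
   Context: Setting: reduction of the steady zero-current Poisson–Nernst–Planck problem for two ion species with valences $\pm1$; $l,r>0$ are boundary concentrations, the permanent charge is $2Q_0$ on $(a,b)$ and $0$ elsewhere in $(0,1)$, $\alpha=H(a)/H(1)$, $\beta=H(b)/H(1)$ with $H(x)=\int_0^x ds/h(s)$, $h>0$ the cross-sectional area. For $Q_0\in\mathbb{R}$, $A>0$ define $B=\frac{1-\beta}{\alpha}(l-A)+r$, $A_M=l+\frac{\alpha}{1-\beta}r$, $S_a=\sqrt{Q_0^2+A^2}$, $S_b=\sqrt{Q_0^2+B^2}$, $N=A-l+S_a-S_b$, and $G_2(Q_0,A,\delta)=\delta Q_0\ln\frac{S_a+\delta Q_0}{S_b+\delta Q_0}-N$. *)

(* Defs.v *)
From Stdlib Require Import Reals.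
From Coquelicot Require Import Coquelicot.
Open Scope R_scope.

Definition Bval (l r alpha beta A : R) : R := (1 - beta) / alpha * (l - A) + r.
Definition A_M (l r alpha beta : R) : R := l + alpha / (1 - beta) * r.
Definition S_a (Q0 A : R) : R := sqrt (Q0 ^ 2 + A ^ 2).
Definition S_b (l r alpha beta Q0 A : R) : R :=
  sqrt (Q0 ^ 2 + (Bval l r alpha beta A) ^ 2).
Definition Nval (l r alpha beta Q0 A : R) : R :=
  A - l + S_a Q0 A - S_b l r alpha beta Q0 A.
Definition G2 (l r alpha beta Q0 A delta : R) : R :=
  delta * Q0 * ln ((S_a Q0 A + delta * Q0) / (S_b l r alpha beta Q0 A + delta * Q0))
  - Nval l r alpha beta Q0 A.

Definition sgn (x : R) : R :=
  if Rlt_dec 0 x then 1 else if Rlt_dec x 0 then -1 else 0.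

(* Defining property of Q0^* (= Q0^- if delta>0, Q0^+ if delta<0):
   dA/dQ0 exists and has the sign of (l - r) to the right of Q0^*,
   and the opposite sign to the left of Q0^*. *)
Definition Qstar_prop (l r delta : R) (Af : R -> R) (Qs : R) : Prop :=
  (delta > 0 -> Qs < 0) /\ (delta < 0 -> Qs > 0) /\
  (forall Q, Qs < Q -> exists d, is_derive Af Q d /\ sgn d = sgn (l - r)) /\
  (forall Q, Q < Qs -> exists d, is_derive Af Q d /\ sgn d = - sgn (l - r)).

(* Main.v *)
Require Import Defs.
From Stdlib Require Import Reals Lra Psatz Classical.
From Coquelicot Require Import Coquelicot.
Open Scope R_scope.

Lemma ln_le_sub1 z : 0 < z -> ln z <= z - 1.
Proof.
  intros Hz. pose proof (exp_ineq1_le (ln z)). rewrite exp_ln in H; lra.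
Qed.

Lemma ln_lt_sub1 z : 0 < z -> z <> 1 -> ln z < z - 1.
Proof.
  intros Hz H1. assert (ln z <> 0).
  { intro H0. apply H1. rewrite <- (exp_ln z Hz), H0. apply exp_0. }
  pose proof (exp_ineq1 (ln z) H). rewrite exp_ln in H0; lra.
Qed.

Lemma cln_lt x y c : 0 < x -> 0 < y -> c < x -> c < y -> x < y ->
  c * ln (x / y) - (x - y) > 0.
Proof.
  intros Hx Hy Hcx Hcy Hxy.
  destruct (Rle_or_lt 0 c) as [Hc|Hc].
  - assert (ln (y/x) < y/x - 1).
    { apply ln_lt_sub1. apply Rdiv_lt_0_compat; lra.
      assert (y/x - 1 = (y-x)/x) by (field; lra).
      assert (0 < (y-x)/x) by (apply Rdiv_lt_0_compat; lra). lra. }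
    assert (ln (x/y) = - ln (y/x)).
    { rewrite <- ln_Rinv by (apply Rdiv_lt_0_compat; lra). f_equal. field; lra. }
    rewrite H0.
    assert (y/x - 1 = (y-x)/x) by (field; lra).
    rewrite H1 in H.
    assert (c * ((y - x)/x) < y - x).
    { apply Rmult_lt_reg_r with x; auto. unfold Rdiv. rewrite Rmult_assoc, Rmult_assoc, Rinv_l by lra.
      rewrite Rmult_1_r. nra. }
    assert (c * ln (y/x) <= c * ((y-x)/x)) by (apply Rmult_le_compat_l; lra).
    lra.
  - assert (ln (x/y) < 0).
    { rewrite <- ln_1. apply ln_increasing. apply Rdiv_lt_0_compat; lra.
      apply Rmult_lt_reg_r with y; auto. unfold Rdiv. rewrite Rmult_assoc, Rinv_l by lra. lra. }
    nra.
Qed.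
Definition Bf l r k a := k*(l-a)+r.
Definition Sf q a := sqrt (q^2 + a^2).
Definition Xf d q a := Sf q a + d*q.
Definition GG l r k d q a := d*q*ln(Xf d q a / Xf d q (Bf l r k a)) - (a - l + Sf q a - Sf q (Bf l r k a)).
Definition psi d q s := d * ln (Xf d q s) - (q + d * Sf q s) / Xf d q s.
Definition psis d q s := s * (q + d * Sf q s) / (Sf q s * (Xf d q s)^2).
Definition psiq d q s := d * (q / Sf q s + d) / Xf d q s
   - ((1 + d * q / Sf q s) * Xf d q s - (q + d * Sf q s) * (q / Sf q s + d)) / (Xf d q s)^2.
Definition Gq l r k d q a := psi d q a - psi d q (Bf l r k a).
Definition Ga l r k d q a := -1 - a / Xf d q a - k * Bf l r k a / Xf d q (Bf l r k a).

Lemma Sf_sq q a : Sf q a ^ 2 = q^2 + a^2.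
Proof. unfold Sf. rewrite pow2_sqrt; nra. Qed.
Lemma Sf_nonneg q a : 0 <= Sf q a.
Proof. unfold Sf. apply sqrt_pos. Qed.
Lemma Sf_pos q a : a <> 0 -> 0 < Sf q a.
Proof. intros. unfold Sf. apply sqrt_lt_R0. assert (0 < a^2) by (apply pow2_gt_0; auto). nra. Qed.
Lemma Sf_pos' q a : q <> 0 -> 0 < Sf q a.
Proof. intros. unfold Sf. apply sqrt_lt_R0. assert (0 < q^2) by (apply pow2_gt_0; auto). nra. Qed.
Lemma Sf_ge_q q a : Rabs q <= Sf q a.
Proof. pose proof (Sf_sq q a). pose proof (Sf_nonneg q a).
  apply Rsqr_incr_0_var. unfold Rsqr. rewrite <- Rabs_mult, Rabs_right by nra. nra. auto. Qed.
Lemma Sf_ge_a q a : Rabs a <= Sf q a.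
Proof. pose proof (Sf_sq q a). pose proof (Sf_nonneg q a).
  apply Rsqr_incr_0_var. unfold Rsqr. rewrite <- Rabs_mult, Rabs_right by nra. nra. auto. Qed.

Lemma Xf_pos d q a : -1 < d < 1 -> (a <> 0 \/ q <> 0) -> 0 < Xf d q a.
Proof.
  intros Hd Ha. unfold Xf. pose proof (Sf_sq q a). pose proof (Sf_nonneg q a).
  assert (q^2 + a^2 > d^2 * q^2).
  { destruct Ha as [Ha|Hq].
    - assert (0 < a^2) by (apply pow2_gt_0; auto). assert (d^2 <= 1) by nra. nra.
    - assert (0 < q^2) by (apply pow2_gt_0; auto). assert (d^2 < 1) by nra.
      assert (0 <= a^2) by nra. nra. }
  nra.
Qed.
Lemma Xf_ge d q a : -1 < d < 1 -> (1 - Rabs d) * Sf q a <= Xf d q a.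
Proof.
  intros Hd. unfold Xf. pose proof (Sf_ge_q q a).
  assert (Rabs (d*q) <= Rabs d * Sf q a) by (rewrite Rabs_mult; apply Rmult_le_compat_l; auto; apply Rabs_pos).
  pose proof (Rle_abs (-(d*q))). rewrite Rabs_Ropp in H1. nra.
Qed.

Lemma D1 l r k d q a : -1 < d < 1 -> 0 < a -> 0 < Bf l r k a ->
  is_derive (fun a => GG l r k d q a) a (Ga l r k d q a).
Proof.
  intros Hd Ha HB.
  assert (Hxa := Xf_pos d q a Hd (or_introl (Rgt_not_eq _ _ Ha))).
  assert (Hxb := Xf_pos d q (Bf l r k a) Hd (or_introl (Rgt_not_eq _ _ HB))).
  assert (Hsa := Sf_pos q a (Rgt_not_eq _ _ Ha)).
  assert (Hsb := Sf_pos q (Bf l r k a) (Rgt_not_eq _ _ HB)).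
  unfold GG, Ga, Xf, Sf, Bf in *.
  auto_derive.
  - replace (q * (q * 1) + a * (a * 1)) with (q^2+a^2) by ring.
    replace (q * (q * 1) + (k * (l + - a) + r) * ((k * (l + - a) + r) * 1)) with (q^2+(k*(l-a)+r)^2) by ring.
    repeat split; try nra; try lra.
    apply Rmult_lt_0_compat; auto. apply Rinv_0_lt_compat; auto.
  - replace (q * (q * 1) + a * (a * 1)) with (q^2+a^2) by ring.
    replace (q * (q * 1) + (k * (l + - a) + r) * ((k * (l + - a) + r) * 1)) with (q^2+(k*(l-a)+r)^2) by ring.
    replace (l + - a) with (l - a) by ring.
    set (Sa := sqrt (q^2+a^2)) in *. set (Sb := sqrt (q^2+(k*(l-a)+r)^2)) in *.
    field. repeat split; lra.
Qed.

Lemma D2 l r k d q a : -1 < d < 1 -> 0 < a -> 0 < Bf l r k a ->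
  is_derive (fun q => GG l r k d q a) q (Gq l r k d q a).
Proof.
  intros Hd Ha HB.
  assert (Hxa := Xf_pos d q a Hd (or_introl (Rgt_not_eq _ _ Ha))).
  assert (Hxb := Xf_pos d q (Bf l r k a) Hd (or_introl (Rgt_not_eq _ _ HB))).
  assert (Hsa := Sf_pos q a (Rgt_not_eq _ _ Ha)).
  assert (Hsb := Sf_pos q (Bf l r k a) (Rgt_not_eq _ _ HB)).
  unfold GG, Gq, psi, Xf, Sf in *. set (b := Bf l r k a) in *.
  auto_derive.
  - replace (q * (q * 1) + a * (a * 1)) with (q^2+a^2) by ring.
    replace (q * (q * 1) + b * (b * 1)) with (q^2+b^2) by ring.
    repeat split; try nra; try lra.
    apply Rmult_lt_0_compat; auto. apply Rinv_0_lt_compat; auto.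
  - replace (q * (q * 1) + a * (a * 1)) with (q^2+a^2) by ring.
    replace (q * (q * 1) + b * (b * 1)) with (q^2+b^2) by ring.
    set (Sa := sqrt (q^2+a^2)) in *. set (Sb := sqrt (q^2+b^2)) in *.
    replace (ln ((Sa + d * q) * / (Sb + d * q))) with (ln (Sa + d*q) - ln (Sb + d*q)).
    2:{ rewrite <- ln_div by lra. reflexivity. }
    field. repeat split; lra.
Qed.

Lemma D3 d q s : -1 < d < 1 -> 0 < s ->
  is_derive (fun s => psi d q s) s (psis d q s).
Proof.
  intros Hd Ha.
  assert (Hxa := Xf_pos d q s Hd (or_introl (Rgt_not_eq _ _ Ha))).
  assert (Hsa := Sf_pos q s (Rgt_not_eq _ _ Ha)).
  unfold psi, psis, Xf, Sf in *.
  auto_derive.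
  - replace (q * (q * 1) + s * (s * 1)) with (q^2+s^2) by ring.
    repeat split; try nra; try lra.
  - replace (q * (q * 1) + s * (s * 1)) with (q^2+s^2) by ring.
    set (Sa := sqrt (q^2+s^2)) in *.
    field. repeat split; lra.
Qed.

Lemma D4 d q s : -1 < d < 1 -> 0 < s ->
  is_derive (fun q => psi d q s) q (psiq d q s).
Proof.
  intros Hd Ha.
  assert (Hxa := Xf_pos d q s Hd (or_introl (Rgt_not_eq _ _ Ha))).
  assert (Hsa := Sf_pos q s (Rgt_not_eq _ _ Ha)).
  unfold psi, psiq, Xf, Sf in *.
  auto_derive.
  - replace (q * (q * 1) + s * (s * 1)) with (q^2+s^2) by ring.
    repeat split; try nra; try lra.
  - replace (q * (q * 1) + s * (s * 1)) with (q^2+s^2) by ring.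
    set (Sa := sqrt (q^2+s^2)) in *.
    field. repeat split; lra.
Qed.

Lemma homog d q s : -1 < d < 1 -> 0 < s ->
  q * psiq d q s = d - s * psis d q s.
Proof.
  intros Hd Ha.
  assert (Hxa := Xf_pos d q s Hd (or_introl (Rgt_not_eq _ _ Ha))).
  assert (Hsa := Sf_pos q s (Rgt_not_eq _ _ Ha)).
  pose proof (Sf_sq q s).
  unfold psiq, psis, Xf in *. set (S := Sf q s) in *.
  apply Rmult_eq_reg_r with (S * (S + d*q)^2).
  2:{ apply Rgt_not_eq. apply Rmult_lt_0_compat; auto. nra. }
  field_simplify; try lra.
  replace (s^2) with (S^2-q^2) by lra. ring.
Qed.

Lemma cln_gt x y c : 0 < x -> 0 < y -> c < x -> c < y -> y < x ->
  c * ln (x / y) - (x - y) < 0.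
Proof.
  intros. pose proof (cln_lt y x c H0 H H2 H1 H3).
  assert (ln (x/y) = - ln (y/x)).
  { rewrite <- ln_Rinv by (apply Rdiv_lt_0_compat; lra). f_equal. field; lra. }
  rewrite H5. lra.
Qed.

Lemma Bf_pos l r k a : 0 < k -> a < l + r / k -> 0 < Bf l r k a.
Proof.
  intros Hk Ha. unfold Bf.
  assert (k * (l - a) > k * (- (r/k))) by (apply Rmult_lt_compat_l; lra).
  replace (k * - (r/k)) with (-r) in H by (field; lra). lra.
Qed.

Lemma GG_eq l r k d q a : GG l r k d q a =
  d * q * ln (Xf d q a / Xf d q (Bf l r k a)) - (Xf d q a - Xf d q (Bf l r k a)) - (a - l).
Proof. unfold GG, Xf. ring. Qed.

Lemma Ga_le l r k d q a : -1 < d < 1 -> 0 < k -> 0 < a -> 0 < Bf l r k a ->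
  Ga l r k d q a <= -1.
Proof.
  intros Hd Hk Ha HB.
  assert (Hxa := Xf_pos d q a Hd (or_introl (Rgt_not_eq _ _ Ha))).
  assert (Hxb := Xf_pos d q (Bf l r k a) Hd (or_introl (Rgt_not_eq _ _ HB))).
  unfold Ga.
  assert (0 < a / Xf d q a) by (apply Rdiv_lt_0_compat; auto).
  assert (0 < k * Bf l r k a / Xf d q (Bf l r k a)).
  { apply Rdiv_lt_0_compat; auto. apply Rmult_lt_0_compat; auto. }
  lra.
Qed.

Lemma G_dec l r k d q a1 a2 : 0 < l -> 0 < r -> -1 < d < 1 -> 0 < k ->
  0 < a1 -> a1 <= a2 -> a2 < l + r / k ->
  GG l r k d q a1 - GG l r k d q a2 >= a2 - a1.
Proof.
  intros Hl Hr Hd Hk H1 H12 H2.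
  destruct (MVT_gen (fun a => GG l r k d q a) a1 a2 (Ga l r k d q)) as [c [Hc E]].
  - intros x Hx. rewrite Rmin_left in Hx by lra. rewrite Rmax_right in Hx by lra.
    apply D1; try lra. apply Bf_pos; lra.
  - intros x Hx. rewrite Rmin_left in Hx by lra. rewrite Rmax_right in Hx by lra.
    apply continuity_pt_filterlim. apply (ex_derive_continuous (fun a => GG l r k d q a)).
    eexists. apply D1; try lra. apply Bf_pos; lra.
  - rewrite Rmin_left in Hc by lra. rewrite Rmax_right in Hc by lra.
    assert (Ga l r k d q c <= -1) by (apply Ga_le; try lra; apply Bf_pos; lra).
    simpl in E. nra.
Qed.

Lemma root_close l r k d q A a : 0 < l -> 0 < r -> -1 < d < 1 -> 0 < k ->
  0 < A < l + r/k -> GG l r k d q A = 0 -> 0 < a < l + r/k ->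
  Rabs (A - a) <= Rabs (GG l r k d q a).
Proof.
  intros Hl Hr Hd Hk HA E Ha.
  destruct (Rle_or_lt a A).
  - pose proof (G_dec l r k d q a A Hl Hr Hd Hk ltac:(lra) H ltac:(lra)).
    rewrite E in H0. rewrite Rabs_right by lra. rewrite Rabs_right by lra. lra.
  - pose proof (G_dec l r k d q A a Hl Hr Hd Hk ltac:(lra) ltac:(lra) ltac:(lra)).
    rewrite E in H0. rewrite Rabs_left by lra. rewrite Rabs_left by lra. lra.
Qed.

Lemma Sf_lt q a b : 0 <= a -> a < b -> Sf q a < Sf q b.
Proof. intros. unfold Sf. apply sqrt_lt_1; nra. Qed.

Lemma Sf_q0 a : 0 <= a -> Sf 0 a = a.
Proof. intros. unfold Sf. replace (0^2 + a^2) with (a^2) by ring. apply sqrt_pow2; auto. Qed.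

Lemma root_exists l r k d q : 0 < l -> 0 < r -> -1 < d < 1 -> 0 < k ->
  exists A, 0 < A < l + r / k /\ GG l r k d q A = 0.
Proof.
  intros Hl Hr Hd Hk.
  assert (HrK : 0 < r / k) by (apply Rdiv_lt_0_compat; lra).
  destruct (Req_dec q 0) as [Hq|Hq].
  - subst q. exists ((l*(1+k)+r)/(2+k)). split.
    + split. apply Rdiv_lt_0_compat; nra.
      apply Rmult_lt_reg_r with ((2+k)*k). nra.
      field_simplify; try lra. nra.
    + unfold GG. set (a := (l*(1+k)+r)/(2+k)).
      assert (0 < a) by (apply Rdiv_lt_0_compat; nra).
      assert (0 < Bf l r k a).
      { apply Bf_pos; auto. unfold a. apply Rmult_lt_reg_r with ((2+k)*k). nra.
        field_simplify; try lra. nra. }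
      rewrite !Sf_q0 by lra. unfold Bf in *. unfold a. field. lra.
  - assert (Hc : forall a, continuity_pt (fun a => GG l r k d q a) a).
    { intro a. apply continuity_pt_filterlim.
      apply (ex_derive_continuous (fun a => GG l r k d q a)).
      assert (Hx1 := Xf_pos d q a Hd (or_intror Hq)).
      assert (Hx2 := Xf_pos d q (Bf l r k a) Hd (or_intror Hq)).
      unfold GG, Xf, Sf, Bf in *. auto_derive.
      assert (0 < q^2) by (apply pow2_gt_0; auto).
      replace (q * (q * 1) + a * (a * 1)) with (q^2+a^2) by ring.
      replace (q * (q * 1) + (k * (l + - a) + r) * ((k * (l + - a) + r) * 1)) with (q^2+(k*(l-a)+r)^2) by ring.
      assert (0 <= (k*(l-a)+r)^2) by (apply pow2_ge_0).
      assert (0 <= a^2) by (apply pow2_ge_0).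
      repeat split; try lra.
      apply Rmult_lt_0_compat; auto. apply Rinv_0_lt_compat; auto. }
    assert (Hsq := Sf_pos' q 0 Hq).
    assert (Hdq : Rabs (d*q) < Sf q 0).
    { rewrite Rabs_mult. pose proof (Sf_ge_q q 0). assert (0 < Rabs q) by (apply Rabs_pos_lt; auto).
      assert (Rabs d < 1) by (apply Rabs_def1; lra). nra. }
    pose proof (Rle_abs (d*q)) as Ha1. pose proof (Rabs_Ropp (d*q)) as Ha2. pose proof (Rle_abs (-(d*q))) as Ha3.
    set (AM := l + r/k).
    assert (E0 : GG l r k d q 0 > 0).
    { rewrite GG_eq. 
      assert (HB0 : Bf l r k 0 > 0) by (unfold Bf; nra).
      pose proof (Sf_lt q 0 (Bf l r k 0) ltac:(lra) HB0).
      pose proof (Sf_pos q (Bf l r k 0) ltac:(lra)).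
      pose proof (cln_lt (Xf d q 0) (Xf d q (Bf l r k 0)) (d*q) ltac:(unfold Xf; lra)
        ltac:(unfold Xf; lra) ltac:(unfold Xf; lra) ltac:(unfold Xf; lra) ltac:(unfold Xf; lra)).
      unfold Xf in *. lra. }
    assert (EM : GG l r k d q AM < 0).
    { rewrite GG_eq.
      assert (HB0 : Bf l r k AM = 0) by (unfold Bf, AM; field; lra).
      rewrite HB0.
      pose proof (Sf_lt q 0 AM ltac:(lra) ltac:(unfold AM; lra)).
      pose proof (Sf_ge_q q AM).
      pose proof (cln_gt (Xf d q AM) (Xf d q 0) (d*q) ltac:(unfold Xf; lra)
        ltac:(unfold Xf; lra) ltac:(unfold Xf; lra) ltac:(unfold Xf; lra) ltac:(unfold Xf; lra)).
      unfold Xf in *. unfold AM in *. lra. }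
    assert (Hcont : continuity (fun a => GG l r k d q a)) by (intro; apply Hc).
    destruct (IVT_gen _ 0 AM 0 Hcont) as [c [Hc1 Hc2]].
    + rewrite Rmin_right by lra. rewrite Rmax_left by lra. lra.
    + rewrite Rmin_left in Hc1 by (unfold AM; lra). rewrite Rmax_right in Hc1 by (unfold AM; lra).
      exists c. split; [|auto].
      split.
      * destruct (Req_dec c 0); [subst; lra|lra].
      * destruct (Req_dec c AM); [rewrite H in Hc2; lra| unfold AM in *; lra].
Qed.

Lemma ln_bound x y m : 0 < m -> m <= x -> m <= y -> Rabs (ln (x/y)) <= Rabs (x - y) / m.
Proof.
  intros Hm Hx Hy.
  assert (h1 : ln (x/y) <= (x - y)/y).
  { pose proof (ln_le_sub1 (x/y) ltac:(apply Rdiv_lt_0_compat; lra)).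
    replace (x/y - 1) with ((x-y)/y) in H by (field; lra). auto. }
  assert (h2 : (x - y)/x <= ln (x/y)).
  { pose proof (ln_le_sub1 (y/x) ltac:(apply Rdiv_lt_0_compat; lra)).
    assert (ln (x/y) = - ln (y/x)).
    { rewrite <- ln_Rinv by (apply Rdiv_lt_0_compat; lra). f_equal. field; lra. }
    replace (y/x - 1) with ((y-x)/x) in H by (field; lra).
    replace ((x-y)/x) with (-((y-x)/x)) by (field; lra). lra. }
  assert (Rabs ((x-y)/y) <= Rabs (x-y)/m).
  { unfold Rdiv. rewrite Rabs_mult, Rabs_inv, (Rabs_right y) by lra.
    apply Rmult_le_compat_l. apply Rabs_pos. apply Rinv_le_contravar; lra. }
  assert (Rabs ((x-y)/x) <= Rabs (x-y)/m).
  { unfold Rdiv. rewrite Rabs_mult, Rabs_inv, (Rabs_right x) by lra.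
    apply Rmult_le_compat_l. apply Rabs_pos. apply Rinv_le_contravar; lra. }
  pose proof (Rle_abs ((x-y)/y)). pose proof (Rle_abs (-((x-y)/x))). rewrite Rabs_Ropp in H2.
  apply Rabs_le. split; lra.
Qed.

Lemma Rabs_d_lt1 d : -1 < d < 1 -> Rabs d < 1.
Proof. intros. apply Rabs_def1; lra. Qed.

Lemma G_l_bound l r k d q : 0 < l -> 0 < r -> -1 < d < 1 -> q <> 0 ->
  Rabs (GG l r k d q l) <= Rabs (l^2 - r^2) / (2 * (1 - Rabs d) * Rabs q).
Proof.
  intros Hl Hr Hd Hq.
  assert (HB : Bf l r k l = r) by (unfold Bf; ring).
  rewrite GG_eq, HB. replace (l - l) with 0 by ring.
  pose proof (Rabs_d_lt1 d Hd) as Hd1.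
  assert (Hq0 : 0 < Rabs q) by (apply Rabs_pos_lt; auto).
  set (x := Xf d q l). set (y := Xf d q r).
  set (m := (1 - Rabs d) * Rabs q).
  assert (Hm : 0 < m) by (unfold m; apply Rmult_lt_0_compat; lra).
  assert (Hmx : m <= x).
  { unfold m, x. pose proof (Xf_ge d q l Hd). pose proof (Sf_ge_q q l).
    apply Rle_trans with ((1 - Rabs d) * Sf q l); auto. apply Rmult_le_compat_l; lra. }
  assert (Hmy : m <= y).
  { unfold m, y. pose proof (Xf_ge d q r Hd). pose proof (Sf_ge_q q r).
    apply Rle_trans with ((1 - Rabs d) * Sf q r); auto. apply Rmult_le_compat_l; lra. }
  pose proof (ln_bound x y m Hm Hmx Hmy) as Hln.
  assert (Hxy : x - y = Sf q l - Sf q r) by (unfold x, y, Xf; ring).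
  assert (Hs : 2 * Rabs q <= Sf q l + Sf q r) by (pose proof (Sf_ge_q q l); pose proof (Sf_ge_q q r); lra).
  assert (Hprod : (Sf q l - Sf q r) * (Sf q l + Sf q r) = l^2 - r^2).
  { pose proof (Sf_sq q l). pose proof (Sf_sq q r). nra. }
  assert (Hxyb : Rabs (x - y) <= Rabs (l^2 - r^2) / (2 * Rabs q)).
  { rewrite Hxy, <- Hprod. rewrite Rabs_mult. rewrite (Rabs_right (Sf q l + Sf q r)) by lra.
    apply Rmult_le_reg_r with (2 * Rabs q). lra.
    field_simplify; try lra. pose proof (Rabs_pos (Sf q l - Sf q r)). nra. }
  rewrite Rabs_minus_sym in Hxyb. rewrite (Rabs_minus_sym x y) in Hln.
  set (D := Rabs (y - x)) in *.
  assert (Hc : Rabs (d * q * ln (x / y)) <= Rabs d * D / (1 - Rabs d)).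
  { rewrite !Rabs_mult. unfold m in Hln.
    replace (Rabs d * D / (1 - Rabs d)) with (Rabs d * Rabs q * (D / ((1 - Rabs d) * Rabs q))) by (field; lra).
    apply Rmult_le_compat_l. apply Rmult_le_pos; apply Rabs_pos. auto. }
  apply Rle_trans with (Rabs (d * q * ln (x / y)) + Rabs (x - y)).
  { replace (d * q * ln (x / y) - (x - y) - 0) with (d * q * ln (x / y) + (y - x)) by ring.
    eapply Rle_trans. apply Rabs_triang. rewrite (Rabs_minus_sym y x). lra. }
  rewrite (Rabs_minus_sym x y). fold D.
  apply Rle_trans with (D / (1 - Rabs d)).
  { replace (D / (1 - Rabs d)) with (Rabs d * D / (1 - Rabs d) + D) by (field; lra). lra. }
  replace (Rabs (l ^ 2 - r ^ 2) / (2 * (1 - Rabs d) * Rabs q)) with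
    ((Rabs (l ^ 2 - r ^ 2) / (2 * Rabs q)) / (1 - Rabs d)) by (field; lra).
  unfold Rdiv. apply Rmult_le_compat_r. left; apply Rinv_0_lt_compat; lra. auto.
Qed.

Lemma cont_pt_eps f x : (forall eps, 0 < eps -> exists del, 0 < del /\
  forall y, Rabs (y - x) < del -> Rabs (f y - f x) < eps) -> continuity_pt f x.
Proof.
  intros H. unfold continuity_pt, continue_in, limit1_in, limit_in.
  intros eps Heps. destruct (H eps Heps) as [del [Hd Hy]]. exists del. split; auto.
  intros y [_ Hyx]. simpl in *. unfold R_dist in *. apply Hy. auto.
Qed.

Lemma eps_of_cont_pt f x : continuity_pt f x -> forall eps, 0 < eps -> exists del, 0 < del /\
  forall y, Rabs (y - x) < del -> Rabs (f y - f x) < eps.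
Proof.
  intros H eps Heps. unfold continuity_pt, continue_in, limit1_in, limit_in in H.
  destruct (H eps Heps) as [del [Hd Hy]]. exists del. split; auto.
  intros y Hyx. destruct (Req_dec y x).
  - subst. replace (f x - f x) with 0 by ring. rewrite Rabs_R0. auto.
  - apply (Hy y). split. unfold D_x, no_cond. split; auto. simpl. unfold R_dist. auto.
Qed.

Lemma deriv_cont f x l : is_derive f x l -> continuity_pt f x.
Proof.
  intros H. apply continuity_pt_filterlim. apply (ex_derive_continuous f). exists l. auto.
Qed.

Lemma mvt_open f df a b : a < b -> (forall x, a < x < b -> is_derive f x (df x)) ->
  (forall x, a <= x <= b -> continuity_pt f x) ->
  exists c, a < c < b /\ f b - f a = df c * (b - a).
Proof.
  intros Hab Hd Hc.
  assert (pr1 : forall c, a < c < b -> derivable_pt f c).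
  { intros c Hc'. exists (df c). apply is_derive_Reals. auto. }
  assert (pr2 : forall c, a < c < b -> derivable_pt id c).
  { intros. apply derivable_pt_id. }
  destruct (MVT f id a b pr1 pr2 Hab Hc) as [c [P E]].
  { intros. apply derivable_continuous_pt. apply derivable_pt_id. }
  exists c. split; auto.
  assert (derive_pt f c (pr1 c P) = df c).
  { apply derive_pt_eq_0. apply is_derive_Reals. auto. }
  assert (derive_pt id c (pr2 c P) = 1).
  { apply derive_pt_eq_0. apply derivable_pt_lim_id. }
  rewrite H, H0 in E. unfold id in E. lra.
Qed.

Lemma crossing_right f : (forall x, continuity_pt f x) ->
  (forall z, f z = 0 -> exists e, 0 < e /\ (forall t, z < t < z + e -> 0 < f t)
                                 /\ (forall t, z - e < t < z -> f t < 0)) ->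
  forall z, f z = 0 -> forall t, z < t -> 0 < f t.
Proof.
  intros Hc Hz z Hfz w Hw.
  destruct (Rlt_or_le 0 (f w)) as [ok|Hfw]; auto. exfalso.
  destruct (Hz z Hfz) as [e [He [Hr _]]].
  assert (Hwe : z + e <= w).
  { destruct (Rle_or_lt (z+e) w); auto. assert (0 < f w) by (apply Hr; lra). lra. }
  assert (Hp : 0 < f (z + e/2)) by (apply Hr; lra).
  remember (z + e/2) as p eqn:Hpdef.
  set (E := fun t => p <= t <= w /\ f t <= 0).
  (* glb via lub of the negated set *)
  set (E' := fun t => E (- t)).
  assert (Hb : bound E').
  { exists (-p). intros t Ht. unfold E', E in Ht. lra. }
  assert (Hne : exists t, E' t).
  { exists (-w). unfold E', E. rewrite Ropp_involutive. split; [lra|auto]. }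
  destruct (completeness E' Hb Hne) as [mm [Hub Hlub]].
  set (m := - mm).
  assert (Hlow : forall t, E t -> m <= t).
  { intros t Ht. unfold m. assert (E' (-t)) by (unfold E'; rewrite Ropp_involutive; auto).
    pose proof (Hub _ H). lra. }
  assert (Hgl : forall b, (forall t, E t -> b <= t) -> b <= m).
  { intros b Hb'. unfold m. assert (mm <= - b).
    { apply Hlub. intros t Ht. unfold E' in Ht. pose proof (Hb' _ Ht). lra. }
    lra. }
  assert (Hmw : m <= w) by (apply Hlow; split; [lra|auto]).
  assert (Hpm : p <= m) by (apply Hgl; intros t Ht; unfold E in Ht; lra).
  assert (Hpos : forall t, p <= t < m -> 0 < f t).
  { intros t Ht. destruct (Rlt_or_le 0 (f t)); auto.
    assert (m <= t) by (apply Hlow; split; [lra|auto]). lra. }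
  assert (Hfm : f m <= 0).
  { destruct (Rle_or_lt (f m) 0) as [ok|Hgt]; auto. exfalso.
    destruct (eps_of_cont_pt f m (Hc m) (f m) Hgt) as [del [Hdel Hd]].
    assert (Hb2 : forall t, E t -> m + del/2 <= t).
    { intros t Ht0. unfold E in Ht0. destruct Ht0 as [Ht Hft]. destruct (Rle_or_lt (m + del/2) t); auto.
      assert (m <= t) by (apply Hlow; split; auto).
      assert (Rabs (t - m) < del) by (rewrite Rabs_right; lra).
      pose proof (Hd t H1). pose proof (Rle_abs (-(f t - f m))). rewrite Rabs_Ropp in H3. lra. }
    pose proof (Hgl _ Hb2). lra. }
  assert (Hpm' : p < m).
  { destruct (Req_dec p m); [|lra]. rewrite <- H in Hfm. lra. }
  assert (Hfm0 : f m = 0).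
  { destruct (Req_dec (f m) 0) as [ok|Hne0]; auto. exfalso.
    assert (Hneg : 0 < - f m) by lra.
    destruct (eps_of_cont_pt f m (Hc m) (- f m) Hneg) as [del [Hdel Hd]].
    set (t := Rmax p (m - del/2)).
    assert (p <= t < m) by (unfold t; split; [apply Rmax_l|apply Rmax_lub_lt; lra]).
    assert (Rabs (t - m) < del).
    { rewrite Rabs_left by lra. unfold t. assert (m - del/2 <= Rmax p (m - del/2)) by apply Rmax_r. lra. }
    pose proof (Hd t H0). pose proof (Hpos t H). pose proof (Rle_abs (f t - f m)). lra. }
  destruct (Hz m Hfm0) as [e2 [He2 [_ Hl2]]].
  set (t := Rmax p (m - e2/2)).
  assert (p <= t < m) by (unfold t; split; [apply Rmax_l|apply Rmax_lub_lt; lra]).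
  assert (m - e2 < t) by (unfold t; assert (m - e2/2 <= Rmax p (m - e2/2)) by apply Rmax_r; lra).
  pose proof (Hpos t H). pose proof (Hl2 t ltac:(lra)). lra.
Qed.

Lemma crossing_left f : (forall x, continuity_pt f x) ->
  (forall z, f z = 0 -> exists e, 0 < e /\ (forall t, z < t < z + e -> 0 < f t)
                                 /\ (forall t, z - e < t < z -> f t < 0)) ->
  forall z, f z = 0 -> forall t, t < z -> f t < 0.
Proof.
  intros Hc Hz z Hfz t Ht.
  set (g := fun x => - f (- x)).
  assert (Hgc : forall x, continuity_pt g x).
  { intro x. unfold g. apply continuity_pt_opp.
    apply (continuity_pt_comp (fun x => -x) f). apply continuity_pt_opp, continuity_pt_id. apply Hc. }
  assert (Hgz : forall z, g z = 0 -> exists e, 0 < e /\ (forall t, z < t < z + e -> 0 < g t)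
                                 /\ (forall t, z - e < t < z -> g t < 0)).
  { intros z0 Hz0. unfold g in Hz0. destruct (Hz (-z0) ltac:(lra)) as [e [He [H1 H2]]].
    exists e. split; auto. split.
    - intros t0 Ht0. unfold g. pose proof (H2 (-t0) ltac:(lra)). lra.
    - intros t0 Ht0. unfold g. pose proof (H1 (-t0) ltac:(lra)). lra. }
  pose proof (crossing_right g Hgc Hgz (-z) ltac:(unfold g; rewrite Ropp_involutive; lra) (-t) ltac:(lra)).
  unfold g in H. rewrite Ropp_involutive in H. lra.
Qed.

Lemma c2_sq f x y : continuity_2d_pt f x y -> continuity_2d_pt (fun u v => (f u v)^2) x y.
Proof.
  intros H. apply continuity_2d_pt_ext with (fun u v => f u v * f u v).
  intros; ring. apply continuity_2d_pt_mult; auto.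
Qed.

Lemma c2_X d f x y : continuity_2d_pt f x y ->
  continuity_2d_pt (fun u v => Xf d u (f u v)) x y.
Proof.
  intros H. unfold Xf, Sf. apply continuity_2d_pt_plus.
  - apply (continuity_1d_2d_pt_comp sqrt (fun u v => u^2 + (f u v)^2)).
    + apply continuity_pt_sqrt. nra.
    + apply continuity_2d_pt_plus. apply (c2_sq (fun u v => u)). apply continuity_2d_pt_id1.
      apply c2_sq; auto.
  - apply continuity_2d_pt_mult. apply continuity_2d_pt_const. apply continuity_2d_pt_id1.
Qed.

Lemma c2_B l r k x y : continuity_2d_pt (fun u v => Bf l r k v) x y.
Proof.
  unfold Bf. apply continuity_2d_pt_plus. apply continuity_2d_pt_mult.
  apply continuity_2d_pt_const. apply continuity_2d_pt_minus. apply continuity_2d_pt_const.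
  apply continuity_2d_pt_id2. apply continuity_2d_pt_const.
Qed.

Lemma c2_Ga l r k d x y : -1 < d < 1 -> 0 < y -> 0 < Bf l r k y ->
  continuity_2d_pt (Ga l r k d) x y.
Proof.
  intros Hd Hy HB. unfold Ga.
  assert (Hxa := Xf_pos d x y Hd (or_introl (Rgt_not_eq _ _ Hy))).
  assert (Hxb := Xf_pos d x (Bf l r k y) Hd (or_introl (Rgt_not_eq _ _ HB))).
  apply continuity_2d_pt_minus. apply continuity_2d_pt_minus.
  apply continuity_2d_pt_const.
  - apply continuity_2d_pt_mult. apply continuity_2d_pt_id2.
    apply continuity_2d_pt_inv. apply (c2_X d (fun u v => v)). apply continuity_2d_pt_id2. lra.
  - apply continuity_2d_pt_mult. apply continuity_2d_pt_mult. apply continuity_2d_pt_const.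
    apply c2_B.
    apply continuity_2d_pt_inv. apply (c2_X d (fun u v => Bf l r k v)). apply c2_B. lra.
Qed.

Definition curve l r k d (Af : R -> R) :=
  forall q, 0 < Af q < l + r / k /\ GG l r k d q (Af q) = 0.

Lemma dom_B l r k a : 0 < k -> 0 < a < l + r/k -> 0 < Bf l r k a.
Proof. intros. apply Bf_pos; lra. Qed.

Lemma A_cont l r k d Af q0 : 0 < l -> 0 < r -> -1 < d < 1 -> 0 < k ->
  curve l r k d Af -> continuity_pt Af q0.
Proof.
  intros Hl Hr Hd Hk HA. apply cont_pt_eps. intros eps Heps.
  destruct (HA q0) as [Ha0 E0].
  pose proof (deriv_cont _ _ _ (D2 l r k d q0 (Af q0) Hd ltac:(lra) (dom_B l r k _ Hk Ha0))) as Hc.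
  destruct (eps_of_cont_pt _ _ Hc eps Heps) as [del [Hdel Hy]].
  exists del. split; auto. intros y Hy'.
  specialize (Hy y Hy'). rewrite E0 in Hy. rewrite Rminus_0_r in Hy.
  destruct (HA y) as [Hay Ey].
  pose proof (root_close l r k d y (Af y) (Af q0) Hl Hr Hd Hk Hay Ey Ha0). lra.
Qed.

Lemma A_deriv l r k d Af q0 : 0 < l -> 0 < r -> -1 < d < 1 -> 0 < k ->
  curve l r k d Af ->
  is_derive Af q0 (- Gq l r k d q0 (Af q0) / Ga l r k d q0 (Af q0)).
Proof.
  intros Hl Hr Hd Hk HA. apply is_derive_Reals. intros eps Heps.
  destruct (HA q0) as [Ha0 E0]. set (a0 := Af q0) in *.
  assert (HB0 := dom_B l r k _ Hk Ha0).
  set (ga := Ga l r k d q0 a0). set (gq := Gq l r k d q0 a0).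
  assert (Hga : ga <= -1) by (apply Ga_le; lra).
  set (e1 := eps / (2 * (Rabs ga + 1))).
  set (e2 := eps / (2 * (Rabs gq + 1))).
  assert (He1 : 0 < e1) by (unfold e1; apply Rdiv_lt_0_compat; [lra|pose proof (Rabs_pos ga); lra]).
  assert (He2 : 0 < e2) by (unfold e2; apply Rdiv_lt_0_compat; [lra|pose proof (Rabs_pos gq); lra]).
  pose proof (D2 l r k d q0 a0 Hd ltac:(lra) HB0) as HD2. apply is_derive_Reals in HD2.
  destruct (HD2 e1 He1) as [del1 Hdel1].
  pose proof (c2_Ga l r k d q0 a0 Hd ltac:(lra) HB0) as Hc2.
  destruct (Hc2 (mkposreal e2 He2)) as [del2 Hdel2]. simpl in Hdel2.
  destruct (eps_of_cont_pt Af q0 (A_cont l r k d Af q0 Hl Hr Hd Hk HA) del2 (cond_pos del2)) as [del3 [Hdel3 Hy3]].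
  assert (Hmin : 0 < Rmin del1 (Rmin del2 del3)).
  { apply Rmin_pos. apply cond_pos. apply Rmin_pos. apply cond_pos. auto. }
  exists (mkposreal _ Hmin). simpl. intros h Hh0 Hh.
  assert (Hh1 : Rabs h < del1) by (eapply Rlt_le_trans; [apply Hh|apply Rmin_l]).
  assert (Hh2 : Rabs h < del2) by (eapply Rlt_le_trans; [apply Hh|]; eapply Rle_trans; [apply Rmin_r|apply Rmin_l]).
  assert (Hh3 : Rabs h < del3) by (eapply Rlt_le_trans; [apply Hh|]; eapply Rle_trans; [apply Rmin_r|apply Rmin_r]).
  specialize (Hdel1 h Hh0 Hh1).
  set (q := q0 + h) in *.
  destruct (HA q) as [Hah Eh]. set (ah := Af q) in *.
  assert (Hah0 : Rabs (ah - a0) < del2).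
  { apply Hy3. unfold q. replace (q0 + h - q0) with h by ring. auto. }
  destruct (MVT_gen (fun a => GG l r k d q a) a0 ah (Ga l r k d q)) as [c [Hc Ec]].
  { intros x Hx. apply D1; try lra.
    - pose proof (Rmin_glb_lt a0 ah 0 ltac:(lra) ltac:(lra)). lra.
    - apply Bf_pos; auto. pose proof (Rmax_lub_lt a0 ah (l + r/k) ltac:(lra) ltac:(lra)). lra. }
  { intros x Hx. apply (deriv_cont _ _ (Ga l r k d q x)). apply D1; try lra.
    - assert (0 < Rmin a0 ah) by (apply Rmin_glb_lt; lra). lra.
    - apply Bf_pos; auto. pose proof (Rmax_lub_lt a0 ah (l + r/k) ltac:(lra) ltac:(lra)). lra. }
  simpl in Ec. rewrite Eh, E0 in *.
  assert (Hcdom : 0 < c < l + r/k).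
  { split. assert (0 < Rmin a0 ah) by (apply Rmin_glb_lt; lra). lra.
    pose proof (Rmax_lub_lt a0 ah (l + r/k) ltac:(lra) ltac:(lra)). lra. }
  set (g' := Ga l r k d q c) in *.
  assert (Hg' : g' <= -1) by (apply Ga_le; try lra; apply Bf_pos; lra).
  assert (Hcl : Rabs (c - a0) < del2).
  { apply Rle_lt_trans with (Rabs (ah - a0)); auto.
    destruct (Rle_or_lt a0 ah).
    - rewrite Rmin_left in Hc by lra. rewrite Rmax_right in Hc by lra.
      rewrite !Rabs_right by lra. lra.
    - rewrite Rmin_right in Hc by lra. rewrite Rmax_left in Hc by lra.
      rewrite !Rabs_left1 by lra. lra. }
  assert (Hgg : Rabs (g' - ga) < e2).
  { apply Hdel2. unfold q. replace (q0 + h - q0) with h by ring. auto. auto. }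
  set (N := (GG l r k d q a0 - 0) / h) in *.
  set (D := (ah - a0) / h).
  assert (HD : D = - N / g').
  { assert (HG : GG l r k d q a0 = - g' * (ah - a0)) by lra.
    unfold D, N. rewrite Rminus_0_r, HG. field. split; lra. }
  assert (Key : D - - gq / ga = (ga * (gq - N) + gq * (g' - ga)) / (g' * ga)).
  { rewrite HD. field. lra. }
  rewrite Key. unfold Rdiv. rewrite Rabs_mult, Rabs_inv.
  assert (Hprod : 1 <= Rabs (g' * ga)).
  { rewrite Rabs_mult. rewrite (Rabs_left g') by lra. rewrite (Rabs_left ga) by lra. nra. }
  assert (Hnum : Rabs (ga * (gq - N) + gq * (g' - ga)) < eps).
  { eapply Rle_lt_trans. apply Rabs_triang. rewrite !Rabs_mult.
    rewrite Rabs_minus_sym in Hdel1. fold gq in Hdel1.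
    assert (Rabs ga * Rabs (gq - N) <= Rabs ga * e1) by (apply Rmult_le_compat_l; [apply Rabs_pos|lra]).
    assert (Rabs gq * Rabs (g' - ga) <= Rabs gq * e2) by (apply Rmult_le_compat_l; [apply Rabs_pos|lra]).
    assert (Rabs ga * e1 < eps / 2).
    { unfold e1. pose proof (Rabs_pos ga). apply Rmult_lt_reg_r with (2 * (Rabs ga + 1)). lra.
      field_simplify; lra. }
    assert (Rabs gq * e2 <= eps / 2).
    { unfold e2. pose proof (Rabs_pos gq). apply Rmult_le_reg_r with (2 * (Rabs gq + 1)). lra.
      field_simplify; lra. }
    destruct (Req_dec ga 0); [lra|].
    assert (Rabs ga * Rabs (gq - N) < Rabs ga * e1).
    { apply Rmult_lt_compat_l. apply Rabs_pos_lt; auto. auto. }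
    lra. }
  assert (0 < / Rabs (g' * ga) <= 1).
  { split. apply Rinv_0_lt_compat; lra. rewrite <- Rinv_1. apply Rinv_le_contravar; lra. }
  pose proof (Rabs_pos (ga * (gq - N) + gq * (g' - ga))). nra.
Qed.

Lemma frac_le a b c e : 0 < b -> 0 < e -> a * e <= c * b -> a / b <= c / e.
Proof.
  intros Hb He H. unfold Rdiv.
  apply Rmult_le_reg_r with (b * e). nra.
  replace (a * / b * (b * e)) with (a * e) by (field; lra).
  replace (c * / e * (b * e)) with (c * b) by (field; lra). auto.
Qed.

Lemma psis_bound d q s : -1 < d < 1 -> 0 < s ->
  Rabs (psis d q s) <= 2 / ((1 - Rabs d)^2 * s).
Proof.
  intros Hd Hs.
  assert (Hx := Xf_pos d q s Hd (or_introl (Rgt_not_eq _ _ Hs))).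
  assert (HS := Sf_pos q s (Rgt_not_eq _ _ Hs)).
  pose proof (Xf_ge d q s Hd) as HXS. pose proof (Sf_ge_q q s). pose proof (Sf_ge_a q s).
  pose proof (Rabs_d_lt1 d Hd). pose proof (Rabs_pos d).
  rewrite (Rabs_right s) in H0 by lra.
  unfold psis. fold (Xf d q s) in *. set (S := Sf q s) in *. set (X := Xf d q s) in *.
  set (e := 1 - Rabs d) in *.
  assert (He : 0 < e) by (unfold e; lra).
  rewrite Rabs_div. rewrite Rabs_mult, (Rabs_right s) by lra.
  rewrite (Rabs_right (S * X^2)) by (apply Rle_ge; apply Rmult_le_pos; nra).
  2:{ apply Rgt_not_eq. apply Rmult_lt_0_compat; nra. }
  assert (Hq : Rabs (q + d * S) <= 2 * S).
  { eapply Rle_trans. apply Rabs_triang. rewrite Rabs_mult, (Rabs_right S) by lra. nra. }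
  apply frac_le. apply Rmult_lt_0_compat; nra. apply Rmult_lt_0_compat; nra.
  assert (e^2 * S^2 <= X^2).
  { replace (e^2*S^2) with ((e*S)*(e*S)) by ring. replace (X^2) with (X*X) by ring.
    assert (0 <= e*S) by (apply Rmult_le_pos; lra). apply Rmult_le_compat; lra. }
  pose proof (Rabs_pos (q + d*S)).
  assert (s * Rabs (q + d * S) * ((e^2) * s) <= s * (2*S) * (e^2 * s)).
  { apply Rmult_le_compat_r. nra. apply Rmult_le_compat_l; lra. }
  assert (s * (2*S) * (e^2 * s) <= 2 * (S * X^2)).
  { assert (s^2 <= S^2) by nra. nra. }
  lra.
Qed.

Lemma psi_lip d q s1 s2 m : -1 < d < 1 -> 0 < m -> m <= s1 -> m <= s2 ->
  Rabs (psi d q s1 - psi d q s2) <= 2 / ((1 - Rabs d)^2 * m) * Rabs (s1 - s2).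
Proof.
  intros Hd Hm H1 H2.
  destruct (MVT_gen (fun s => psi d q s) s2 s1 (psis d q)) as [c [Hc Ec]].
  - intros x Hx. apply D3; auto. assert (m <= Rmin s2 s1) by (apply Rmin_glb; lra). lra.
  - intros x Hx. apply (deriv_cont _ _ (psis d q x)). apply D3; auto.
    assert (m <= Rmin s2 s1) by (apply Rmin_glb; lra). lra.
  - simpl in Ec. rewrite Ec. rewrite Rabs_mult.
    assert (m <= c) by (assert (m <= Rmin s2 s1) by (apply Rmin_glb; lra); lra).
    pose proof (psis_bound d q c Hd ltac:(lra)).
    pose proof (Rabs_d_lt1 d Hd).
    assert (2 / ((1 - Rabs d) ^ 2 * c) <= 2 / ((1 - Rabs d) ^ 2 * m)).
    { apply frac_le. assert (0 < (1 - Rabs d)^2) by (apply pow2_gt_0; lra). nra.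
      assert (0 < (1 - Rabs d)^2) by (apply pow2_gt_0; lra). nra.
      assert (0 < (1 - Rabs d)^2) by (apply pow2_gt_0; lra). nra. }
    apply Rmult_le_compat. apply Rabs_pos. apply Rabs_pos. lra. lra.
Qed.

Lemma Gq_lip l r k d q a1 a2 m : -1 < d < 1 -> 0 < k -> 0 < m -> m <= a1 -> m <= a2 ->
  m <= Bf l r k a1 -> m <= Bf l r k a2 ->
  Rabs (Gq l r k d q a1 - Gq l r k d q a2) <= 2 / ((1 - Rabs d)^2 * m) * (1 + k) * Rabs (a1 - a2).
Proof.
  intros Hd Hk Hm H1 H2 H3 H4. unfold Gq.
  pose proof (psi_lip d q a1 a2 m Hd Hm H1 H2).
  pose proof (psi_lip d q (Bf l r k a1) (Bf l r k a2) m Hd Hm H3 H4).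
  assert (Bf l r k a1 - Bf l r k a2 = - k * (a1 - a2)) by (unfold Bf; ring).
  rewrite H5, Rabs_mult, Rabs_Ropp, (Rabs_right k) in H0 by lra.
  replace (psi d q a1 - psi d q (Bf l r k a1) - (psi d q a2 - psi d q (Bf l r k a2)))
    with ((psi d q a1 - psi d q a2) - (psi d q (Bf l r k a1) - psi d q (Bf l r k a2))) by ring.
  eapply Rle_trans. apply Rabs_triang. rewrite Rabs_Ropp. lra.
Qed.

Definition Gqq l r k d q a := psiq d q a - psiq d q (Bf l r k a).

Lemma Gq_deriv l r k d q a : -1 < d < 1 -> 0 < a -> 0 < Bf l r k a ->
  is_derive (fun q => Gq l r k d q a) q (Gqq l r k d q a).
Proof.
  intros. unfold Gq, Gqq. apply (is_derive_minus (fun q => psi d q a) (fun q => psi d q (Bf l r k a))).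
  apply D4; auto. apply D4; auto.
Qed.

Definition Lc d k m := 2 / ((1 - Rabs d)^2 * m) * (1 + k).

Lemma Lc_pos d k m : -1 < d < 1 -> 0 < k -> 0 < m -> 0 < Lc d k m.
Proof.
  intros. unfold Lc. pose proof (Rabs_d_lt1 d H).
  assert (0 < (1 - Rabs d)^2) by (apply pow2_gt_0; lra).
  apply Rmult_lt_0_compat; [|lra]. apply Rdiv_lt_0_compat; [lra|]. nra.
Qed.

Lemma local_dom l r k a0 a : 0 < k -> 0 < a0 -> 0 < Bf l r k a0 ->
  Rabs (a - a0) < Rmin (Rmin a0 (Bf l r k a0) / 2) (Rmin a0 (Bf l r k a0) / 2 / k) ->
  Rmin a0 (Bf l r k a0) / 2 <= a /\ Rmin a0 (Bf l r k a0) / 2 <= Bf l r k a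
  /\ 0 < a /\ 0 < Bf l r k a.
Proof.
  intros Hk Ha HB H.
  set (m := Rmin a0 (Bf l r k a0) / 2) in *.
  assert (Hm1 : m <= a0 / 2) by (unfold m; pose proof (Rmin_l a0 (Bf l r k a0)); lra).
  assert (Hm2 : m <= Bf l r k a0 / 2) by (unfold m; pose proof (Rmin_r a0 (Bf l r k a0)); lra).
  assert (Hm0 : 0 < m) by (unfold m; pose proof (Rmin_glb_lt a0 (Bf l r k a0) 0 Ha HB); lra).
  assert (H1 : Rabs (a - a0) < m) by (eapply Rlt_le_trans; [apply H|apply Rmin_l]).
  assert (H2 : Rabs (a - a0) < m / k) by (eapply Rlt_le_trans; [apply H|apply Rmin_r]).
  apply Rabs_def2 in H1. apply Rabs_def2 in H2.
  assert (k * (a - a0) < m) by (apply Rmult_lt_reg_r with (/k); [apply Rinv_0_lt_compat; lra|];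
    replace (k * (a - a0) * / k) with (a - a0) by (field; lra); unfold Rdiv in H2; lra).
  assert (Bf l r k a = Bf l r k a0 - k * (a - a0)) by (unfold Bf; ring).
  repeat split; lra.
Qed.

Lemma local_pos l r k a0 : 0 < k -> 0 < a0 -> 0 < Bf l r k a0 ->
  0 < Rmin (Rmin a0 (Bf l r k a0) / 2) (Rmin a0 (Bf l r k a0) / 2 / k).
Proof.
  intros. assert (0 < Rmin a0 (Bf l r k a0)) by (apply Rmin_glb_lt; lra).
  apply Rmin_glb_lt. lra. apply Rdiv_lt_0_compat; lra.
Qed.

Lemma P_cont l r k d Af q0 : 0 < l -> 0 < r -> -1 < d < 1 -> 0 < k ->
  curve l r k d Af -> continuity_pt (fun q => Gq l r k d q (Af q)) q0.
Proof.
  intros Hl Hr Hd Hk HA. apply cont_pt_eps. intros eps Heps.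
  destruct (HA q0) as [Ha0 E0]. set (a0 := Af q0) in *.
  assert (HB0 := dom_B l r k _ Hk Ha0).
  set (m := Rmin a0 (Bf l r k a0) / 2).
  assert (Hm0 : 0 < m) by (unfold m; pose proof (Rmin_glb_lt a0 (Bf l r k a0) 0 ltac:(lra) HB0); lra).
  set (L := Lc d k m). assert (HL : 0 < L) by (apply Lc_pos; auto).
  pose proof (local_pos l r k a0 Hk ltac:(lra) HB0) as Hloc.
  set (t := Rmin (Rmin (Rmin a0 (Bf l r k a0) / 2) (Rmin a0 (Bf l r k a0) / 2 / k)) (eps / (2 * L))).
  assert (Ht : 0 < t) by (apply Rmin_pos; auto; apply Rdiv_lt_0_compat; lra).
  destruct (eps_of_cont_pt Af q0 (A_cont l r k d Af q0 Hl Hr Hd Hk HA) t Ht) as [del1 [Hdel1 H1]].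
  pose proof (deriv_cont _ _ _ (Gq_deriv l r k d q0 a0 Hd ltac:(lra) HB0)) as Hc.
  destruct (eps_of_cont_pt _ _ Hc (eps/2) ltac:(lra)) as [del2 [Hdel2 H2]].
  exists (Rmin del1 del2). split. apply Rmin_pos; auto.
  intros y Hy.
  assert (Hy1 : Rabs (y - q0) < del1) by (eapply Rlt_le_trans; [apply Hy|apply Rmin_l]).
  assert (Hy2 : Rabs (y - q0) < del2) by (eapply Rlt_le_trans; [apply Hy|apply Rmin_r]).
  specialize (H1 y Hy1). specialize (H2 y Hy2). simpl in H2. fold a0 in H1.
  assert (Hloc1 : Rabs (Af y - a0) < Rmin (Rmin a0 (Bf l r k a0) / 2) (Rmin a0 (Bf l r k a0) / 2 / k))
    by (eapply Rlt_le_trans; [apply H1|apply Rmin_l]).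
  assert (Hloc2 : Rabs (Af y - a0) < eps / (2 * L)) by (eapply Rlt_le_trans; [apply H1|apply Rmin_r]).
  destruct (local_dom l r k a0 (Af y) Hk ltac:(lra) HB0 Hloc1) as [Hm1 [Hm2 _]].
  pose proof (Gq_lip l r k d y (Af y) a0 m Hd Hk Hm0 Hm1
    ltac:(unfold m; pose proof (Rmin_l a0 (Bf l r k a0)); lra) Hm2
    ltac:(unfold m; pose proof (Rmin_r a0 (Bf l r k a0)); lra)) as Hlip.
  fold (Lc d k m) L in Hlip.
  assert (L * Rabs (Af y - a0) <= eps / 2).
  { apply Rmult_lt_compat_l with (r := L) in Hloc2; auto.
    replace (L * (eps / (2 * L))) with (eps / 2) in Hloc2 by (field; lra). lra. }
  replace (Gq l r k d y (Af y) - Gq l r k d q0 a0) with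
    ((Gq l r k d y (Af y) - Gq l r k d y a0) + (Gq l r k d y a0 - Gq l r k d q0 a0)) by ring.
  eapply Rle_lt_trans. apply Rabs_triang. unfold L, Lc in *. lra.
Qed.

Lemma P_deriv0 l r k d Af z : 0 < l -> 0 < r -> -1 < d < 1 -> 0 < k ->
  curve l r k d Af -> Gq l r k d z (Af z) = 0 ->
  derivable_pt_lim (fun q => Gq l r k d q (Af q)) z (Gqq l r k d z (Af z)).
Proof.
  intros Hl Hr Hd Hk HA Hz eps Heps.
  destruct (HA z) as [Ha0 E0]. set (a0 := Af z) in *.
  assert (HB0 := dom_B l r k _ Hk Ha0).
  set (m := Rmin a0 (Bf l r k a0) / 2).
  assert (Hm0 : 0 < m) by (unfold m; pose proof (Rmin_glb_lt a0 (Bf l r k a0) 0 ltac:(lra) HB0); lra).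
  set (L := Lc d k m). assert (HL : 0 < L) by (apply Lc_pos; auto).
  pose proof (local_pos l r k a0 Hk ltac:(lra) HB0) as Hloc.
  pose proof (A_deriv l r k d Af z Hl Hr Hd Hk HA) as HAd. fold a0 in HAd.
  rewrite Hz in HAd. replace (- 0 / Ga l r k d z a0) with 0 in HAd by (unfold Rdiv; ring).
  apply is_derive_Reals in HAd.
  destruct (HAd (eps / (2 * L)) ltac:(apply Rdiv_lt_0_compat; lra)) as [del1 H1].
  pose proof (Gq_deriv l r k d z a0 Hd ltac:(lra) HB0) as HG. apply is_derive_Reals in HG.
  destruct (HG (eps/2) ltac:(lra)) as [del2 H2].
  destruct (eps_of_cont_pt Af z (A_cont l r k d Af z Hl Hr Hd Hk HA) _ Hloc) as [del3 [Hdel3 H3]].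
  assert (Hmin : 0 < Rmin del1 (Rmin del2 del3)).
  { apply Rmin_pos. apply cond_pos. apply Rmin_pos. apply cond_pos. auto. }
  exists (mkposreal _ Hmin). simpl. intros h Hh0 Hh.
  assert (Hh1 : Rabs h < del1) by (eapply Rlt_le_trans; [apply Hh|apply Rmin_l]).
  assert (Hh2 : Rabs h < del2) by (eapply Rlt_le_trans; [apply Hh|]; eapply Rle_trans; [apply Rmin_r|apply Rmin_l]).
  assert (Hh3 : Rabs h < del3) by (eapply Rlt_le_trans; [apply Hh|]; eapply Rle_trans; [apply Rmin_r|apply Rmin_r]).
  specialize (H1 h Hh0 Hh1). specialize (H2 h Hh0 Hh2). simpl in H2.
  specialize (H3 (z + h) ltac:(replace (z + h - z) with h by ring; auto)). fold a0 in H3.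
  rewrite Rminus_0_r in H1. fold a0 in H1.
  destruct (local_dom l r k a0 (Af (z+h)) Hk ltac:(lra) HB0 H3) as [Hm1 [Hm2 _]].
  pose proof (Gq_lip l r k d (z+h) (Af (z+h)) a0 m Hd Hk Hm0 Hm1
    ltac:(unfold m; pose proof (Rmin_l a0 (Bf l r k a0)); lra) Hm2
    ltac:(unfold m; pose proof (Rmin_r a0 (Bf l r k a0)); lra)) as Hlip.
  fold (Lc d k m) L in Hlip.
  rewrite Hz. rewrite Hz in H2.
  replace ((Gq l r k d (z + h) (Af (z + h)) - 0) / h - Gqq l r k d z a0) with
    ((Gq l r k d (z + h) (Af (z + h)) - Gq l r k d (z+h) a0) / h +
     ((Gq l r k d (z + h) a0 - 0) / h - Gqq l r k d z a0)) by (field; auto).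
  eapply Rle_lt_trans. apply Rabs_triang.
  assert (Rabs ((Gq l r k d (z + h) (Af (z + h)) - Gq l r k d (z + h) a0) / h) < eps / 2).
  { unfold Rdiv. rewrite Rabs_mult, Rabs_inv.
    assert (0 < Rabs h) by (apply Rabs_pos_lt; auto).
    unfold Rdiv in H1. rewrite Rabs_mult, Rabs_inv in H1.
    apply Rle_lt_trans with (L * Rabs (Af (z + h) - a0) * / Rabs h).
    { apply Rmult_le_compat_r. left; apply Rinv_0_lt_compat; auto. auto. }
    rewrite Rmult_assoc. apply Rmult_lt_compat_l with (r := L) in H1; auto.
    replace (L * (eps * / (2 * L))) with (eps * / 2) in H1 by (field; lra). auto. }
  lra.
Qed.

Lemma Sf_pp q a : 0 < a -> 0 < Sf q a.
Proof. intros. apply Sf_pos. lra. Qed.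
Lemma Xf_pp d q a : -1 < d < 1 -> 0 < a -> 0 < Xf d q a.
Proof. intros. apply Xf_pos; auto. left. lra. Qed.

Lemma dpsis_eq d q s : -1 < d < 1 -> 0 < s ->
  d * psis d q s = s * (d * (q + d * Sf q s)) / (Sf q s * (Xf d q s)^2).
Proof. intros. unfold psis. field.
  assert (Hx := Xf_pos d q s H (or_introl (Rgt_not_eq _ _ H0))).
  assert (HS := Sf_pos q s (Rgt_not_eq _ _ H0)). split; lra. Qed.

Lemma dpsis_pos d q s : -1 < d < 1 -> 0 < s -> 0 < d * (q + d * Sf q s) -> 0 < d * psis d q s.
Proof.
  intros. rewrite dpsis_eq by auto.
  assert (Hx := Xf_pos d q s H (or_introl (Rgt_not_eq _ _ H0))).
  assert (HS := Sf_pos q s (Rgt_not_eq _ _ H0)).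
  apply Rdiv_lt_0_compat. nra. apply Rmult_lt_0_compat; auto. nra.
Qed.

Lemma dpsis_neg d q s : -1 < d < 1 -> 0 < s -> d * (q + d * Sf q s) < 0 -> d * psis d q s < 0.
Proof.
  intros. rewrite dpsis_eq by auto.
  assert (Hx := Xf_pos d q s H (or_introl (Rgt_not_eq _ _ H0))).
  assert (HS := Sf_pos q s (Rgt_not_eq _ _ H0)).
  assert (0 < Sf q s * Xf d q s ^ 2) by (apply Rmult_lt_0_compat; auto; nra).
  unfold Rdiv. assert (0 < / (Sf q s * Xf d q s ^ 2)) by (apply Rinv_0_lt_compat; auto).
  assert (s * (d * (q + d * Sf q s)) < 0) by nra. nra.
Qed.

Lemma dphi_mono d q s1 s2 : d <> 0 -> 0 < s1 < s2 ->
  d * (q + d * Sf q s1) < d * (q + d * Sf q s2).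
Proof.
  intros Hd Hs. pose proof (Sf_lt q s1 s2 ltac:(lra) ltac:(lra)).
  assert (0 < d * d) by (apply Rsqr_pos_lt; auto). nra.
Qed.

Lemma psi_eq_sign d q a b : -1 < d < 1 -> d <> 0 -> 0 < a < b -> psi d q a = psi d q b ->
  d * (q + d * Sf q a) < 0 /\ 0 < d * (q + d * Sf q b).
Proof.
  intros Hd Hd0 Hab E.
  assert (Hmvt : exists c, a < c < b /\ psi d q b - psi d q a = psis d q c * (b - a)).
  { apply (mvt_open (fun s => psi d q s) (psis d q)). lra.
    intros x Hx. apply D3; lra.
    intros x Hx. apply (deriv_cont _ _ (psis d q x)). apply D3; lra. }
  destruct Hmvt as [c [Hc Ec]]. rewrite E in Ec.
  assert (Hz : d * psis d q c = 0).
  { assert (psis d q c * (b - a) = 0) by lra.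
    apply Rmult_integral in H. destruct H; [rewrite H; ring|lra]. }
  split.
  - destruct (Rlt_or_le (d * (q + d * Sf q a)) 0) as [ok|Hc1]; auto. exfalso.
    pose proof (dphi_mono d q a c Hd0 ltac:(lra)).
    pose proof (dpsis_pos d q c Hd ltac:(lra) ltac:(lra)). lra.
  - destruct (Rlt_or_le 0 (d * (q + d * Sf q b))) as [ok|Hc1]; auto. exfalso.
    pose proof (dphi_mono d q c b Hd0 ltac:(lra)).
    pose proof (dpsis_neg d q c Hd ltac:(lra) ltac:(lra)). lra.
Qed.

Lemma aux_lt d q a b : -1 < d < 1 -> d <> 0 -> 0 < a < b -> psi d q a = psi d q b ->
  d * q < 0 /\ psiq d q a - psiq d q b < 0.
Proof.
  intros Hd Hd0 Hab E.
  destruct (psi_eq_sign d q a b Hd Hd0 Hab E) as [Ha Hb].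
  assert (Hdq : d * q < 0).
  { pose proof (Sf_nonneg q a). assert (0 < d*d) by (apply Rsqr_pos_lt; auto). nra. }
  split; auto.
  pose proof (homog d q a Hd ltac:(lra)). pose proof (homog d q b Hd ltac:(lra)).
  pose proof (dpsis_neg d q a Hd ltac:(lra) Ha). pose proof (dpsis_pos d q b Hd ltac:(lra) Hb).
  assert (Hw : d * q * (psiq d q a - psiq d q b) > 0).
  { replace (d * q * (psiq d q a - psiq d q b)) with (d * (q * psiq d q a) - d * (q * psiq d q b)) by ring.
    rewrite H, H0.
    replace (d * (d - a * psis d q a) - d * (d - b * psis d q b)) with
      (b * (d * psis d q b) - a * (d * psis d q a)) by ring.
    nra. }
  destruct (Rlt_or_le (psiq d q a - psiq d q b) 0) as [ok|Hc]; auto. nra.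
Qed.

Lemma Gqq_sign l r k d q a : -1 < d < 1 -> d <> 0 -> 0 < a -> 0 < Bf l r k a ->
  a <> Bf l r k a -> Gq l r k d q a = 0 ->
  d * q < 0 /\ (a - Bf l r k a) * Gqq l r k d q a > 0.
Proof.
  intros Hd Hd0 Ha HB Hne E. unfold Gq in E. unfold Gqq.
  destruct (Rlt_or_le a (Bf l r k a)).
  - destruct (aux_lt d q a (Bf l r k a) Hd Hd0 ltac:(lra) ltac:(lra)). split; auto. nra.
  - destruct (aux_lt d q (Bf l r k a) a Hd Hd0 ltac:(lra) ltac:(lra)). split; auto. nra.
Qed.

Lemma curve_Al l r k d q A : 0 < l -> 0 < r -> -1 < d < 1 -> 0 < k ->
  0 < A < l + r/k -> GG l r k d q A = 0 ->
  (l < r -> l < A) /\ (r < l -> A < l).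
Proof.
  intros Hl Hr Hd Hk HA E.
  assert (Hlr : 0 < l < l + r/k) by (split; [lra|]; assert (0 < r/k) by (apply Rdiv_lt_0_compat; lra); lra).
  assert (HBl : Bf l r k l = r) by (unfold Bf; ring).
  assert (Gl : GG l r k d q l = d * q * ln (Xf d q l / Xf d q r) - (Xf d q l - Xf d q r)).
  { rewrite GG_eq, HBl. ring. }
  pose proof (Sf_pp q l ltac:(lra)). pose proof (Sf_pp q r ltac:(lra)).
  assert (Hxl := Xf_pp d q l Hd ltac:(lra)).
  assert (Hxr := Xf_pp d q r Hd ltac:(lra)).
  split; intros Hlr'.
  - assert (GG l r k d q l > 0).
    { rewrite Gl. apply cln_lt; auto; unfold Xf; try lra. pose proof (Sf_lt q l r ltac:(lra) Hlr'). lra. }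
    destruct (Rlt_or_le l A) as [ok|Hle]; auto.
    pose proof (G_dec l r k d q A l Hl Hr Hd Hk ltac:(lra) Hle ltac:(lra)). lra.
  - assert (GG l r k d q l < 0).
    { rewrite Gl. apply cln_gt; auto; unfold Xf; try lra. pose proof (Sf_lt q r l ltac:(lra) Hlr'). lra. }
    destruct (Rlt_or_le A l) as [ok|Hle]; auto.
    pose proof (G_dec l r k d q l A Hl Hr Hd Hk ltac:(lra) Hle ltac:(lra)). lra.
Qed.

Lemma curve_AB l r k d q A : 0 < l -> 0 < r -> -1 < d < 1 -> 0 < k ->
  0 < A < l + r/k -> GG l r k d q A = 0 ->
  (l < r -> A < Bf l r k A) /\ (r < l -> Bf l r k A < A).
Proof.
  intros Hl Hr Hd Hk HA E.
  destruct (curve_Al l r k d q A Hl Hr Hd Hk HA E) as [H1 H2].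
  assert (HB := dom_B l r k A Hk HA).
  rewrite GG_eq in E.
  pose proof (Sf_pp q A ltac:(lra)). pose proof (Sf_pp q (Bf l r k A) ltac:(lra)).
  assert (Hxa := Xf_pp d q A Hd ltac:(lra)).
  assert (Hxb := Xf_pp d q (Bf l r k A) Hd ltac:(lra)).
  split; intros Hlr.
  - specialize (H1 Hlr).
    destruct (Rlt_or_le A (Bf l r k A)) as [ok|Hle]; auto. exfalso.
    destruct (Req_dec A (Bf l r k A)) as [Heq|Hne].
    + rewrite <- Heq in E. unfold Rdiv in E. rewrite Rinv_r, ln_1 in E by lra. lra.
    + pose proof (Sf_lt q (Bf l r k A) A ltac:(lra) ltac:(lra)).
      pose proof (cln_gt (Xf d q A) (Xf d q (Bf l r k A)) (d * q) Hxa Hxb ltac:(unfold Xf; lra)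
        ltac:(unfold Xf; lra) ltac:(unfold Xf; lra)). lra.
  - specialize (H2 Hlr).
    destruct (Rlt_or_le (Bf l r k A) A) as [ok|Hle]; auto. exfalso.
    destruct (Req_dec A (Bf l r k A)) as [Heq|Hne].
    + rewrite <- Heq in E. unfold Rdiv in E. rewrite Rinv_r, ln_1 in E by lra. lra.
    + pose proof (Sf_lt q A (Bf l r k A) ltac:(lra) ltac:(lra)).
      pose proof (cln_lt (Xf d q A) (Xf d q (Bf l r k A)) (d * q) Hxa Hxb ltac:(unfold Xf; lra)
        ltac:(unfold Xf; lra) ltac:(unfold Xf; lra)). lra.
Qed.

Lemma mono_contra g dg L C : (forall t, is_derive g t (dg t)) -> (forall t, 0 < dg t) ->
  (forall t, t <> 0 -> Rabs (g t - L) <= C / Rabs t) -> False.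
Proof.
  intros Hg Hpos Hb.
  assert (Hc : forall t, continuity_pt g t) by (intro t; apply (deriv_cont _ _ (dg t)); auto).
  assert (Hinc : forall a b, a < b -> g a < g b).
  { intros a b Hab. destruct (mvt_open g dg a b Hab (fun x _ => Hg x) (fun x _ => Hc x)) as [c [_ E]].
    pose proof (Hpos c). nra. }
  set (e := g 1 - g (-1)).
  assert (He : 0 < e) by (unfold e; pose proof (Hinc (-1) 1 ltac:(lra)); lra).
  assert (HC : 0 <= C).
  { pose proof (Hb 1 ltac:(intro; lra)). rewrite Rabs_R1 in H. pose proof (Rabs_pos (g 1 - L)). lra. }
  set (T := 2 * C / e + 2).
  assert (HT : 2 <= T) by (unfold T; assert (0 <= 2 * C / e) by (apply Rmult_le_pos; [lra|left; apply Rinv_0_lt_compat; lra]); lra).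
  pose proof (Hb T ltac:(intro; lra)). pose proof (Hb (-T) ltac:(intro; lra)).
  rewrite (Rabs_right T) in H by lra. rewrite (Rabs_left (-T)) in H0 by lra. rewrite Ropp_involutive in H0.
  pose proof (Hinc 1 T ltac:(lra)). pose proof (Hinc (-T) (-1) ltac:(lra)).
  apply Rabs_le_between in H. apply Rabs_le_between in H0.
  assert (2 * C / T < e).
  { assert (HT0 : 0 < T) by lra.
    assert (e * T = 2*C + 2*e) by (unfold T; field; lra).
    apply Rmult_lt_reg_r with T; auto. replace (2*C/T*T) with (2*C) by (field; lra). lra. }
  assert (2 * C / T = C / T + C / T) by (field; lra).
  unfold e in *. lra.
Qed.

Lemma deriv_sign_cross f z D : derivable_pt_lim f z D -> f z = 0 -> 0 < D ->
  exists e, 0 < e /\ (forall t, z < t < z + e -> 0 < f t) /\ (forall t, z - e < t < z -> f t < 0).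
Proof.
  intros Hd Hz HD. destruct (Hd D HD) as [del Hdel].
  exists del. split. apply cond_pos. split.
  - intros t Ht. specialize (Hdel (t - z) ltac:(intro; lra) ltac:(rewrite Rabs_right; lra)).
    replace (z + (t - z)) with t in Hdel by ring. rewrite Hz, Rminus_0_r in Hdel.
    apply Rabs_def2 in Hdel. destruct Hdel.
    assert (0 < f t / (t - z)) by lra.
    assert (f t = f t / (t - z) * (t - z)) by (field; lra). nra.
  - intros t Ht. specialize (Hdel (t - z) ltac:(intro; lra) ltac:(rewrite Rabs_left; lra)).
    replace (z + (t - z)) with t in Hdel by ring. rewrite Hz, Rminus_0_r in Hdel.
    apply Rabs_def2 in Hdel. destruct Hdel.
    assert (0 < f t / (t - z)) by lra.
    assert (f t = f t / (t - z) * (t - z)) by (field; lra). nra.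
Qed.

Lemma A_bound l r k d Af q : 0 < l -> 0 < r -> -1 < d < 1 -> 0 < k ->
  curve l r k d Af -> q <> 0 ->
  Rabs (Af q - l) <= (Rabs (l^2 - r^2) / (2 * (1 - Rabs d))) / Rabs q.
Proof.
  intros Hl Hr Hd Hk HA Hq. destruct (HA q) as [Ha E].
  assert (Hlr : 0 < l < l + r/k) by (split; [lra|]; assert (0 < r/k) by (apply Rdiv_lt_0_compat; lra); lra).
  pose proof (root_close l r k d q (Af q) l Hl Hr Hd Hk Ha E Hlr).
  pose proof (G_l_bound l r k d q Hl Hr Hd Hq).
  pose proof (Rabs_d_lt1 d Hd). assert (0 < Rabs q) by (apply Rabs_pos_lt; auto).
  replace (Rabs (l ^ 2 - r ^ 2) / (2 * (1 - Rabs d)) / Rabs q) with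
    (Rabs (l ^ 2 - r ^ 2) / (2 * (1 - Rabs d) * Rabs q)) by (field; lra). lra.
Qed.

Lemma zero_props l r k d Af z : 0 < l -> 0 < r -> -1 < d < 1 -> 0 < k -> d <> 0 -> l <> r ->
  curve l r k d Af -> Gq l r k d z (Af z) = 0 ->
  d * z < 0 /\ 0 < (l - r) * Gqq l r k d z (Af z).
Proof.
  intros Hl Hr Hd Hk Hd0 Hlr HA Hz.
  destruct (HA z) as [Ha E].
  destruct (curve_AB l r k d z (Af z) Hl Hr Hd Hk Ha E) as [H1 H2].
  assert (HB := dom_B l r k _ Hk Ha).
  assert (Hne : Af z <> Bf l r k (Af z)).
  { destruct (Rlt_or_le l r). specialize (H1 H). lra. assert (r < l) by lra. specialize (H2 H0). lra. }
  destruct (Gqq_sign l r k d z (Af z) Hd Hd0 ltac:(lra) HB Hne Hz) as [Hdz Hs].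
  split; auto.
  destruct (Rlt_or_le l r). specialize (H1 H). nra. assert (r < l) by lra. specialize (H2 H0). nra.
Qed.

Lemma Qstar_core l r k d Af : 0 < l -> 0 < r -> -1 < d < 1 -> 0 < k -> d <> 0 -> l <> r ->
  curve l r k d Af ->
  exists z, d * z < 0 /\
    (forall t, z < t -> 0 < (l - r) * Gq l r k d t (Af t)) /\
    (forall t, t < z -> (l - r) * Gq l r k d t (Af t) < 0).
Proof.
  intros Hl Hr Hd Hk Hd0 Hlr HA.
  set (f := fun t => (l - r) * Gq l r k d t (Af t)).
  assert (Hfc : forall x, continuity_pt f x).
  { intro x. unfold f. apply (continuity_pt_mult (fun _ => l - r) (fun t => Gq l r k d t (Af t))).
    apply continuity_pt_const. intros a b; auto. apply P_cont; auto. }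
  assert (Hfz : forall z, f z = 0 -> exists e, 0 < e /\ (forall t, z < t < z + e -> 0 < f t)
                                 /\ (forall t, z - e < t < z -> f t < 0)).
  { intros z Hz. unfold f in Hz.
    assert (Hz' : Gq l r k d z (Af z) = 0).
    { apply Rmult_integral in Hz. destruct Hz; [exfalso; lra|auto]. }
    destruct (zero_props l r k d Af z Hl Hr Hd Hk Hd0 Hlr HA Hz') as [_ Hs].
    apply (deriv_sign_cross f z ((l - r) * Gqq l r k d z (Af z))); auto.
    unfold f. apply (derivable_pt_lim_scal (fun t => Gq l r k d t (Af t)) (l - r) z).
    apply P_deriv0; auto. }
  assert (Hex : exists z, f z = 0).
  { destruct (Classical_Prop.classic (exists z, f z = 0)) as [ok|Hno]; auto. exfalso.
    assert (Hnz : forall t, f t <> 0) by (intros t Ht; apply Hno; exists t; auto).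
    assert (Hcont : continuity f) by (intro; apply Hfc).
    set (C := Rabs (l - r) * (Rabs (l^2 - r^2) / (2 * (1 - Rabs d)))).
    assert (Hder : forall t, is_derive Af t (- Gq l r k d t (Af t) / Ga l r k d t (Af t)))
      by (intro; apply A_deriv; auto).
    assert (Hga : forall t, Ga l r k d t (Af t) <= -1).
    { intro t. destruct (HA t) as [Ha _]. apply Ga_le; try lra. apply dom_B; auto. }
    destruct (Rlt_or_le 0 (f 0)) as [Hf0|Hf0].
    - assert (Hall : forall t, 0 < f t).
      { intro t. destruct (Rlt_or_le 0 (f t)) as [ok|Hft]; auto. exfalso.
        destruct (IVT_gen f 0 t 0 Hcont) as [c [_ Hc]].
        + split. apply Rle_trans with (f t). apply Rmin_r. lra. apply Rle_trans with (f 0). lra. apply Rmax_l.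
        + apply (Hnz c Hc). }
      apply (mono_contra (fun t => (l - r) * Af t) (fun t => (l - r) * (- Gq l r k d t (Af t) / Ga l r k d t (Af t))) ((l - r) * l) C).
      + intro t. apply is_derive_scal. auto.
      + intro t. pose proof (Hall t). pose proof (Hga t). unfold f in H.
        replace ((l - r) * (- Gq l r k d t (Af t) / Ga l r k d t (Af t))) with
          (((l - r) * Gq l r k d t (Af t)) / (- Ga l r k d t (Af t))) by (field; lra).
        apply Rdiv_lt_0_compat; lra.
      + intros t Ht. replace ((l - r) * Af t - (l - r) * l) with ((l - r) * (Af t - l)) by ring.
        rewrite Rabs_mult. unfold C. unfold Rdiv at 1. rewrite Rmult_assoc.
        apply Rmult_le_compat_l. apply Rabs_pos. apply (A_bound l r k d Af t); auto.
    - assert (Hf0' : f 0 < 0) by (pose proof (Hnz 0); lra).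
      assert (Hall : forall t, f t < 0).
      { intro t. destruct (Rlt_or_le (f t) 0) as [ok|Hft]; auto. exfalso.
        destruct (IVT_gen f 0 t 0 Hcont) as [c [_ Hc]].
        + split. apply Rle_trans with (f 0). apply Rmin_l. lra. apply Rle_trans with (f t). lra. apply Rmax_r.
        + apply (Hnz c Hc). }
      apply (mono_contra (fun t => - (l - r) * Af t) (fun t => - (l - r) * (- Gq l r k d t (Af t) / Ga l r k d t (Af t))) (- (l - r) * l) C).
      + intro t. apply is_derive_scal. auto.
      + intro t. pose proof (Hall t). pose proof (Hga t). unfold f in H.
        replace (- (l - r) * (- Gq l r k d t (Af t) / Ga l r k d t (Af t))) with
          ((-((l - r) * Gq l r k d t (Af t))) / (- Ga l r k d t (Af t))) by (field; lra).
        apply Rdiv_lt_0_compat; lra.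
      + intros t Ht. replace (- (l - r) * Af t - - (l - r) * l) with (- (l - r) * (Af t - l)) by ring.
        rewrite Rabs_mult, Rabs_Ropp. unfold C. unfold Rdiv at 1. rewrite Rmult_assoc.
        apply Rmult_le_compat_l. apply Rabs_pos. apply (A_bound l r k d Af t); auto. }
  destruct Hex as [z Hz].
  exists z. split.
  - unfold f in Hz. apply Rmult_integral in Hz. destruct Hz as [Hz|Hz]; [exfalso; lra|].
    apply (zero_props l r k d Af z); auto.
  - split.
    + intros t Ht. apply (crossing_right f Hfc Hfz z Hz t Ht).
    + intros t Ht. apply (crossing_left f Hfc Hfz z Hz t Ht).
Qed.

Lemma sgn_pos x : 0 < x -> sgn x = 1.
Proof. intros. unfold sgn. destruct (Rlt_dec 0 x); [auto|lra]. Qed.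
Lemma sgn_neg x : x < 0 -> sgn x = -1.
Proof. intros. unfold sgn. destruct (Rlt_dec 0 x); [lra|]. destruct (Rlt_dec x 0); [auto|lra]. Qed.
Lemma sgn_zero : sgn 0 = 0.
Proof. unfold sgn. destruct (Rlt_dec 0 0); [lra|]. destruct (Rlt_dec 0 0); [lra|auto]. Qed.
Lemma sgn_eq1 x : sgn x = 1 -> 0 < x.
Proof. unfold sgn. destruct (Rlt_dec 0 x); auto. destruct (Rlt_dec x 0); lra. Qed.
Lemma sgn_eqm1 x : sgn x = -1 -> x < 0.
Proof. unfold sgn. destruct (Rlt_dec 0 x). lra. destruct (Rlt_dec x 0); lra. Qed.

Lemma sgn_same x y : 0 < x * y -> sgn x = sgn y.
Proof.
  intros H. destruct (Rlt_or_le 0 y).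
  - assert (0 < x) by nra. rewrite !sgn_pos; auto.
  - assert (y < 0) by (destruct (Req_dec y 0); [subst; lra|lra]).
    assert (x < 0) by nra. rewrite !sgn_neg; auto.
Qed.
Lemma sgn_opp x y : x * y < 0 -> sgn x = - sgn y.
Proof.
  intros H. destruct (Rlt_or_le 0 y).
  - assert (x < 0) by nra. rewrite (sgn_neg x), (sgn_pos y); auto; lra.
  - assert (y < 0) by (destruct (Req_dec y 0); [subst; lra|lra]).
    assert (0 < x) by nra. rewrite (sgn_neg y), (sgn_pos x); auto; lra.
Qed.

Lemma lim_from_bound f L C : 0 <= C -> (forall q, q <> 0 -> Rabs (f q - L) <= C / Rabs q) ->
  is_lim f p_infty L /\ is_lim f m_infty L.
Proof.
  intros HC Hb. split; apply is_lim_spec; intro eps; simpl.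
  - exists (C / eps + 1). intros x Hx.
    assert (0 <= C / eps) by (apply Rmult_le_pos; auto; left; apply Rinv_0_lt_compat; apply cond_pos).
    assert (Hx0 : 0 < x) by lra.
    eapply Rle_lt_trans. apply Hb. intro; lra. rewrite Rabs_right by lra.
    pose proof (cond_pos eps).
    apply Rmult_lt_reg_r with x; auto. replace (C / x * x) with C by (field; lra).
    assert (C / eps * eps = C) by (field; lra). nra.
  - exists (- (C / eps + 1)). intros x Hx.
    assert (0 <= C / eps) by (apply Rmult_le_pos; auto; left; apply Rinv_0_lt_compat; apply cond_pos).
    assert (Hx0 : x < 0) by lra.
    eapply Rle_lt_trans. apply Hb. intro; lra. rewrite Rabs_left by lra.
    pose proof (cond_pos eps).
    apply Rmult_lt_reg_r with (-x); [lra|]. replace (C / - x * - x) with C by (field; lra).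
    assert (C / eps * eps = C) by (field; lra). nra.
Qed.

Lemma Qs_deriv (Af : R -> R) t (P : R -> Prop) :
  (exists dd, is_derive Af t dd /\ P dd) -> is_derive Af t (Derive Af t) /\ P (Derive Af t).
Proof.
  intros [dd [H1 H2]]. rewrite (is_derive_unique Af t dd H1). auto.
Qed.

Theorem theorem3p8 (l r alpha beta D1 D2 : R) :
  0 < l -> 0 < r -> 0 < alpha -> alpha < beta -> beta < 1 ->
  0 < D1 -> 0 < D2 -> D1 <> D2 ->
  let delta := (D2 - D1) / (D2 + D1) in
  (forall Q0 : R, exists! A : R,
      0 < A < A_M l r alpha beta /\ G2 l r alpha beta Q0 A delta = 0) /\
  (forall Af : R -> R,
    (forall Q0 : R, 0 < Af Q0 < A_M l r alpha beta /\
                    G2 l r alpha beta Q0 (Af Q0) delta = 0) ->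
    is_lim Af p_infty l /\ is_lim Af m_infty l /\
    (exists Qs : R, Qstar_prop l r delta Af Qs) /\
    (forall Qs : R, Qstar_prop l r delta Af Qs ->
      forall Q0 : R,
        (l < r -> l <= Af Q0 <= Af Qs) /\
        (l > r -> Af Qs <= Af Q0 <= l) /\
        (l = r -> Af Q0 = l /\ l = r /\ r = Af Qs))).
Proof.
  intros Hl Hr Hal Hab Hb HD1 HD2 HD12 delta.
  set (k := (1 - beta) / alpha).
  assert (Hk : 0 < k) by (unfold k; apply Rdiv_lt_0_compat; lra).
  assert (HAM : A_M l r alpha beta = l + r / k) by (unfold A_M, k; field; lra).
  assert (HG : forall Q A, G2 l r alpha beta Q A delta = GG l r k delta Q A) by (intros; reflexivity).
  assert (Hd : -1 < delta < 1).
  { unfold delta. split.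
    - apply Rmult_lt_reg_r with (D2 + D1). lra. field_simplify; lra.
    - apply Rmult_lt_reg_r with (D2 + D1). lra. field_simplify; lra. }
  assert (Hd0 : delta <> 0).
  { unfold delta. intro H. apply HD12. assert (D2 - D1 = 0).
    { replace (D2 - D1) with ((D2 - D1) / (D2 + D1) * (D2 + D1)) by (field; lra). rewrite H. ring. }
    lra. }
  split.
  { intros Q0. destruct (root_exists l r k delta Q0 Hl Hr Hd Hk) as [A [HA EA]].
    exists A. split.
    - rewrite HAM, HG. auto.
    - intros A' [HA' EA']. rewrite HAM in HA'. rewrite HG in EA'.
      pose proof (root_close l r k delta Q0 A' A Hl Hr Hd Hk HA' EA' HA).
      rewrite EA, Rabs_R0 in H. apply Rabs_le_between in H. lra. }
  intros Af HAf.
  assert (HA : curve l r k delta Af).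
  { intro q. destruct (HAf q) as [H1 H2]. rewrite HAM in H1. rewrite HG in H2. auto. }
  assert (Hcont : forall q, continuity_pt Af q) by (intro; apply (A_cont l r k delta); auto).
  assert (Hconst : l = r -> forall q, Af q = l).
  { intros Hlr q. destruct (HA q) as [Hq Eq].
    assert (Hlr2 : 0 < l < l + r/k) by (split; [lra|]; assert (0 < r/k) by (apply Rdiv_lt_0_compat; lra); lra).
    pose proof (root_close l r k delta q (Af q) l Hl Hr Hd Hk Hq Eq Hlr2).
    assert (GG l r k delta q l = 0).
    { rewrite GG_eq. replace (Bf l r k l) with l by (unfold Bf; lra).
      unfold Rdiv. rewrite Rinv_r. rewrite ln_1. ring.
      apply Rgt_not_eq. apply Xf_pp; auto. }
    rewrite H0, Rabs_R0 in H. apply Rabs_le_between in H. lra. }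
  split; [|split; [|split]].
  - apply (lim_from_bound Af l (Rabs (l^2 - r^2) / (2 * (1 - Rabs delta)))).
    + pose proof (Rabs_d_lt1 delta Hd). apply Rmult_le_pos. apply Rabs_pos.
      left. apply Rinv_0_lt_compat. lra.
    + intros q Hq. apply (A_bound l r k delta Af q); auto.
  - apply (lim_from_bound Af l (Rabs (l^2 - r^2) / (2 * (1 - Rabs delta)))).
    + pose proof (Rabs_d_lt1 delta Hd). apply Rmult_le_pos. apply Rabs_pos.
      left. apply Rinv_0_lt_compat. lra.
    + intros q Hq. apply (A_bound l r k delta Af q); auto.
  - destruct (Req_dec l r) as [Hlr|Hlr].
    + assert (Hder : forall Q, is_derive Af Q 0).
      { intro Q. apply (is_derive_ext (fun _ => l)). intro t. rewrite (Hconst Hlr t). auto.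
        auto_derive; auto. }
      exists (if Rlt_dec 0 delta then -1 else 1).
      unfold Qstar_prop. rewrite Hlr, Rminus_diag, sgn_zero.
      split; [|split; [|split]].
      * intros Hdp. destruct (Rlt_dec 0 delta); lra.
      * intros Hdn. destruct (Rlt_dec 0 delta); lra.
      * intros Q _. exists 0. split; auto. apply sgn_zero.
      * intros Q _. exists 0. split; auto. rewrite sgn_zero. ring.
    + destruct (Qstar_core l r k delta Af Hl Hr Hd Hk Hd0 Hlr HA) as [z [Hdz [Hright Hleft]]].
      exists z. unfold Qstar_prop. split; [|split; [|split]].
      * intros. nra.
      * intros. nra.
      * intros Q HQ. exists (- Gq l r k delta Q (Af Q) / Ga l r k delta Q (Af Q)).
        split. apply A_deriv; auto.
        pose proof (Hright Q HQ).
        assert (Hga : Ga l r k delta Q (Af Q) <= -1).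
        { destruct (HA Q) as [Ha _]. apply Ga_le; try lra. apply dom_B; auto. }
        apply sgn_same.
        replace (- Gq l r k delta Q (Af Q) / Ga l r k delta Q (Af Q) * (l - r)) with
          ((l - r) * Gq l r k delta Q (Af Q) / (- Ga l r k delta Q (Af Q))) by (field; lra).
        apply Rdiv_lt_0_compat; lra.
      * intros Q HQ. exists (- Gq l r k delta Q (Af Q) / Ga l r k delta Q (Af Q)).
        split. apply A_deriv; auto.
        pose proof (Hleft Q HQ).
        assert (Hga : Ga l r k delta Q (Af Q) <= -1).
        { destruct (HA Q) as [Ha _]. apply Ga_le; try lra. apply dom_B; auto. }
        apply sgn_opp.
        replace (- Gq l r k delta Q (Af Q) / Ga l r k delta Q (Af Q) * (l - r)) with
          (((l - r) * Gq l r k delta Q (Af Q)) * / (- Ga l r k delta Q (Af Q))) by (field; lra).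
        assert (0 < / (- Ga l r k delta Q (Af Q))) by (apply Rinv_0_lt_compat; lra). nra.
  - intros Qs [_ [_ [HR HL]]] Q0.
    assert (Hinc_right : forall s, (forall t, Qs < t -> 0 < Derive Af t) -> Qs < s -> Af Qs < Af s).
    { intros s Hpos Hs.
      destruct (mvt_open Af (Derive Af) Qs s Hs) as [c [Hc E]].
      - intros x Hx. apply (Qs_deriv Af x (fun _ => True)). destruct (HR x ltac:(lra)) as [dd [H1 _]].
        exists dd. auto.
      - intros x _. auto.
      - pose proof (Hpos c ltac:(lra)). nra. }
    assert (Hdec_right : forall s, (forall t, Qs < t -> Derive Af t < 0) -> Qs < s -> Af s < Af Qs).
    { intros s Hneg Hs.
      destruct (mvt_open Af (Derive Af) Qs s Hs) as [c [Hc E]].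
      - intros x Hx. apply (Qs_deriv Af x (fun _ => True)). destruct (HR x ltac:(lra)) as [dd [H1 _]].
        exists dd. auto.
      - intros x _. auto.
      - pose proof (Hneg c ltac:(lra)). nra. }
    assert (Hinc_left : forall s, (forall t, t < Qs -> 0 < Derive Af t) -> s < Qs -> Af s < Af Qs).
    { intros s Hpos Hs.
      destruct (mvt_open Af (Derive Af) s Qs Hs) as [c [Hc E]].
      - intros x Hx. apply (Qs_deriv Af x (fun _ => True)). destruct (HL x ltac:(lra)) as [dd [H1 _]].
        exists dd. auto.
      - intros x _. auto.
      - pose proof (Hpos c ltac:(lra)). nra. }
    assert (Hdec_left : forall s, (forall t, t < Qs -> Derive Af t < 0) -> s < Qs -> Af Qs < Af s).
    { intros s Hneg Hs.
      destruct (mvt_open Af (Derive Af) s Qs Hs) as [c [Hc E]].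
      - intros x Hx. apply (Qs_deriv Af x (fun _ => True)). destruct (HL x ltac:(lra)) as [dd [H1 _]].
        exists dd. auto.
      - intros x _. auto.
      - pose proof (Hneg c ltac:(lra)). nra. }
    assert (DR : forall t, Qs < t -> sgn (Derive Af t) = sgn (l - r)).
    { intros t Ht. destruct (Qs_deriv Af t (fun dd => sgn dd = sgn (l - r)) (HR t Ht)). auto. }
    assert (DL : forall t, t < Qs -> sgn (Derive Af t) = - sgn (l - r)).
    { intros t Ht. destruct (Qs_deriv Af t (fun dd => sgn dd = - sgn (l - r)) (HL t Ht)). auto. }
    destruct (HA Q0) as [HQ0 EQ0].
    destruct (curve_Al l r k delta Q0 (Af Q0) Hl Hr Hd Hk HQ0 EQ0) as [Al1 Al2].
    split; [|split].
    + intros Hlr. rewrite (sgn_neg (l - r)) in DR, DL by lra.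
      split. specialize (Al1 Hlr). lra.
      destruct (Rlt_or_le Qs Q0) as [H|H].
      * left. apply Hdec_right; auto. intros t Ht. apply sgn_eqm1. auto.
      * destruct (Req_dec Q0 Qs) as [E|E]. subst; lra.
        left. apply Hinc_left; [|lra]. intros t Ht. apply sgn_eq1. rewrite DL by auto. ring.
    + intros Hlr. rewrite (sgn_pos (l - r)) in DR, DL by lra.
      split; [|specialize (Al2 Hlr); lra].
      destruct (Rlt_or_le Qs Q0) as [H|H].
      * left. apply Hinc_right; auto. intros t Ht. apply sgn_eq1. auto.
      * destruct (Req_dec Q0 Qs) as [E|E]. subst; lra.
        left. apply Hdec_left; [|lra]. intros t Ht. apply sgn_eqm1. rewrite DL by auto. ring.
    + intros Hlr. rewrite (Hconst Hlr Q0), (Hconst Hlr Qs). auto.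
Qed.
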